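(* Let $\Gamma$ be a weakly distance-regular digraph, let $q\ge3$, and let $(x_0,x_1,\dots,x_{m-1})$ be a circuit consisting of arcs of type $(1,q-1)$ whose length $m$ is minimal among all circuits of $\Gamma$ consisting of arcs of type $(1,q-1)$. Let $(a,b)=\tilde\partial(x_0,x_2)$ and assume $k_{1,q-1}\ge k_{a,b}$. For each $i$ (indices read modulo $m$) let $Y_i=P_{(1,q-1),(1,q-1)}(x_{i-1},x_{i+1})$. If $p_{(1,q-1),(1,q-1)}^{(2,q-2)}>0$ or $|\Gamma_{1,q-1}^2|=1$, then for all $i$ we have $(x_{i-1},x_{i+1})\in\Gamma_{a,b}$ and \[P_{(a,b),(q-1,1)}(x_{i-2},x_{i-1})=P_{(q-1,1),(a,b)}(x_{i+1},x_{i+2})=Y_i.\] Moreover, if $q>3$ and $\Gamma$ is a Cayley digraph of an additive group, then $Y_i-x_{i-1}=Y_{i+1}-x_i$ for all $i$.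
   Context: Digraphs are finite and simple. $\partial(x,y)$ is the length of a shortest directed path from $x$ to $y$; $\tilde\partial(x,y)=(\partial(x,y),\partial(y,x))$; $\Gamma_{\tilde i}=\{(x,y):\tilde\partial(x,y)=\tilde i\}$, and $\Gamma_{a,b}$ means $\Gamma_{(a,b)}$. A strongly connected digraph $\Gamma$ is weakly distance-regular if $(V\Gamma,\{\Gamma_{\tilde i}\})$ is an association scheme. For pairs $\tilde i,\tilde j$ and vertices $x,y$, $P_{\tilde i,\tilde j}(x,y)=\{z:\tilde\partial(x,z)=\tilde i,\ \tilde\partial(z,y)=\tilde j\}$, and $p_{\tilde i,\tilde j}^{\tilde l}=|P_{\tilde i,\tilde j}(x,y)|$ for any $(x,y)\in\Gamma_{\tilde l}$ (taken to be $0$ if $\tilde l$ is not a two-way distance of $\Gamma$). $k_{a,b}=|\{y:\tilde\partial(x,y)=(a,b)\}|$ is the valency. $\Gamma_{1,q-1}^2$ is the set of relations $\Gamma_{\tilde l}$ with $p_{(1,q-1),(1,q-1)}^{\tilde l}\ne0$. An arc $(u,v)$ is of type $(1,r)$ if $\partial(v,u)=r$. A circuit is a closed directed path with distinct vertices. A Cayley digraph of an additive group $G$ with respect to $S\subseteq G\setminus\{0\}$ has vertex set $G$ and arcs $(x,y)$ with $y-x\in S$; for a set $Y$ and element $x$, $Y-x=\{y-x:y\in Y\}$. *)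

(* Defs.v *)
From HB Require Import structures.
From mathcomp Require Import all_boot all_order all_algebra.
Set Implicit Arguments. Unset Strict Implicit. Unset Printing Implicit Defensive.
Import GRing.Theory Num.Theory.

Section Digraph.
Variables (V : finType) (A : rel V).

Fixpoint walkn (n : nat) (x y : V) : bool :=
  match n with
  | 0 => x == y
  | n'.+1 => [exists z, A x z && walkn n' z y]
  end.

Definition strongly_connected : Prop := forall x y : V, exists n, walkn n x y.

(* length of a shortest directed path (= shortest walk) from x to y;
   meaningful when y is reachable from x (shortest walk has length < #|V|) *)
Definition dist (x y : V) : nat := find (fun n => walkn n x y) (iota 0 #|V|).

Definition tdist (x y : V) : nat * nat := (dist x y, dist y x).

Definition Pset (i j : nat * nat) (x y : V) : {set V} :=
  [set z | (tdist x z == i) && (tdist z y == j)].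

(* simple, strongly connected, and the two-way distance relations form an
   association scheme: identity relation is Gamma_{0,0}, they partition V*V,
   transposes are Gamma_{b,a} (all automatic); the remaining axiom is that
   |P_{i,j}(x,y)| depends only on tdist x y. *)
Definition weakly_distance_regular : Prop :=
  [/\ irreflexive A, strongly_connected &
      forall (i j : nat * nat) (x y x' y' : V), tdist x y = tdist x' y' ->
        #|Pset i j x y| = #|Pset i j x' y'| ].

(* intersection number p^l_{i,j}, 0 if l is not a two-way distance *)
Definition pnum (i j l : nat * nat) : nat :=
  if [pick xy : V * V | tdist xy.1 xy.2 == l] is Some xy
  then #|Pset i j xy.1 xy.2| else 0.

Definition valency (i : nat * nat) : nat :=
  if [pick x : V] is Some x then #|[set y | tdist x y == i]| else 0.

(* Gamma_i^2 : the (labels of the) relations Gamma_l with p^l_{i,i} <> 0 *)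
Definition Gamma_sq (i : nat * nat) : seq (nat * nat) :=
  undup [seq l <- [seq tdist xy.1 xy.2 | xy <- enum [set: V * V]] | pnum i i l != 0].

Definition arc_type (r : nat) (u v : V) : bool := A u v && (dist v u == r).

Definition type_circuit (r : nat) (s : seq V) : bool :=
  [&& s != [::], uniq s & cycle (arc_type r) s].

(* vertex x_i of the circuit (x0 :: xs), index i read modulo m = size (x0::xs) *)
Definition cvert (x0 : V) (xs : seq V) (i : int) : V :=
  nth x0 (x0 :: xs) `|(i %% (size xs).+1%:Z)%Z|%N.

Definition Ycirc (q : nat) (x0 : V) (xs : seq V) (i : int) : {set V} :=
  Pset (1, q - 1)%N (1, q - 1)%N (cvert x0 xs (i - 1)%R) (cvert x0 xs (i + 1)%R).

(* The digraph is (identified via the bijection phi with) the Cayley digraph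
   Cay(G,S) of the additive group G, S a subset of G \ {0}. *)
Definition cayley_iso (G : finZmodType) (S : {set G}) (phi : V -> G) : Prop :=
  [/\ bijective phi, (0 \notin S)%R &
      forall x y : V, A x y = ((phi y - phi x)%R \in S)].

End Digraph.

(* Main.v *)
Require Import Defs.
From HB Require Import structures.
From mathcomp Require Import all_boot all_order all_algebra.
From mathcomp Require Import zify.
Import GRing.Theory Num.Theory.
Set Implicit Arguments. Unset Strict Implicit.

Section Basics.
Variables (V : finType) (A : rel V).
Hypothesis irrA : irreflexive A.
Hypothesis scA : strongly_connected A.

Lemma walknP n x y :
  reflect (exists p, [/\ size p = n, path A x p & last x p = y]) (walkn A n x y).
Proof.
elim: n x => [|n IH] x /=.
  apply: (iffP eqP) => [->|[p [/size0nil -> _ /= ->]]] //; by exists [::].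
apply: (iffP existsP) => [[z /andP[Axz /IH [p [sp pp lp]]]]|[[|z p] [//= [sp] /andP[Axz pp] lp]]].
  by exists (z :: p); rewrite /= sp Axz pp lp.
by exists z; rewrite Axz; apply/IH; exists p.
Qed.

Lemma walk_cat m n x y z : walkn A m x y -> walkn A n y z -> walkn A (m + n) x z.
Proof.
move=> /walknP [p [sp pp lp]] /walknP [r [sr pr lr]]; apply/walknP.
exists (p ++ r); rewrite size_cat cat_path last_cat sp sr pp lp pr lr; split=> //.
Qed.

Lemma walk_short n x y : walkn A n x y -> exists2 k, k < #|V| & walkn A k x y.
Proof.
move=> /walknP [p [sp pp lp]].
rewrite -lp; case: (shortenP pp) => p' pp' up' _.
exists (size p'); last by apply/walknP; exists p'.
have := card_uniqP up'; rewrite /= => H.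
have := max_card (mem (x :: p')). rewrite -/(card _) H /=. done.
Qed.

Lemma dist_le n x y : walkn A n x y -> dist A x y <= n.
Proof.
rewrite /dist => W.
have [lt|ge] := ltnP n #|V|.
  have: n \in iota 0 #|V| by rewrite mem_iota.
  move=> /(nthP 0) [k ks ek].
  rewrite size_iota in ks; rewrite nth_iota // add0n in ek; subst k.
  case: ltnP => // H.
  have := @before_find _ 0 (fun n => walkn A n x y) (iota 0 #|V|) n.
  by rewrite nth_iota // add0n W => /(_ H).
by apply: leq_trans (find_size _ _) _; rewrite size_iota.
Qed.

Lemma dist_walk x y : walkn A (dist A x y) x y.
Proof.
have [n W] := scA x y.
have [k kV Wk] := walk_short W.
rewrite /dist.
have H : has (fun n => walkn A n x y) (iota 0 #|V|).
  by apply/hasP; exists k => //; rewrite mem_iota.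
have := nth_find 0 H.
have := H; rewrite has_find size_iota => Hf.
by rewrite nth_iota.
Qed.

Lemma dist_tri x y z : dist A x z <= dist A x y + dist A y z.
Proof. apply: dist_le; apply: walk_cat; apply: dist_walk. Qed.

Lemma dist0 x y : (dist A x y == 0) = (x == y).
Proof.
apply/idP/idP => [/eqP H|/eqP ->].
  by have := dist_walk x y; rewrite H.
by rewrite -leqn0; apply: (@dist_le 0) => /=.
Qed.

Lemma distxx x : dist A x x = 0.
Proof. by apply/eqP; rewrite dist0. Qed.

Lemma dist1 x y : A x y -> dist A x y = 1.
Proof.
move=> Axy; apply/eqP; rewrite eqn_leq; apply/andP; split.
  by apply: dist_le => /=; apply/existsP; exists y; rewrite Axy eqxx.
rewrite lt0n dist0; apply/eqP => E; subst; by rewrite irrA in Axy.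
Qed.

Lemma distA x y : dist A x y = 1 -> A x y.
Proof.
move=> H; have := dist_walk x y; rewrite H /= => /existsP [z /andP [Axz /eqP <-]] //.
Qed.

Lemma walk_fun (c : nat -> V) n k :
  (forall j, n <= j < n + k -> A (c j) (c j.+1)) -> walkn A k (c n) (c (n + k)).
Proof.
elim: k n => [|k IH] n H /=; first by rewrite addn0.
apply/existsP; exists (c n.+1); rewrite H /=; last by apply/andP; split; lia.
rewrite addnS -addSn; apply: IH => j /andP [a b]; apply: H.
apply/andP; split; lia.
Qed.

Lemma dist_fun (c : nat -> V) n k :
  (forall j, n <= j < n + k -> A (c j) (c j.+1)) -> dist A (c n) (c (n + k)) <= k.
Proof. by move=> H; apply: dist_le; apply: walk_fun. Qed.

End Basics.

Definition sw (p : nat * nat) := (p.2, p.1).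

Section Count.
Variables (V : finType) (A : rel V).
Hypothesis wdr : weakly_distance_regular A.

Lemma tdist_sw x y : tdist A y x = sw (tdist A x y).
Proof. by []. Qed.

Lemma eq_sw (p r : nat * nat) : (sw p == sw r) = (p == r).
Proof. by case: p r => [a b] [c d]; rewrite /sw /= !xpair_eqE andbC. Qed.

Lemma eq_tdist_sw x y p : (tdist A x y == sw p) = (tdist A y x == p).
Proof. by rewrite (tdist_sw y x) eq_sw. Qed.

Lemma inv_wdr i j x y x' y' : tdist A x y = tdist A x' y' ->
  #|Pset A i j x y| = #|Pset A i j x' y'|.
Proof. by case: wdr => _ _; apply. Qed.

Lemma pnumE i j l x y : tdist A x y = l -> pnum A i j l = #|Pset A i j x y|.
Proof.
move=> H; rewrite /pnum; case: pickP => [[x' y'] /= /eqP H'|H'].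
  by apply: inv_wdr; rewrite H H'.
by have := H' (x, y); rewrite /= H eqxx.
Qed.

Lemma irrA : irreflexive A. Proof. by case: wdr. Qed.
Lemma scA : strongly_connected A. Proof. by case: wdr. Qed.

Lemma tdistxx x : tdist A x x = (0, 0).
Proof. by rewrite /tdist distxx //; apply: scA. Qed.

Lemma valencyE l x : valency A l = #|[set y | tdist A x y == l]|.
Proof.
have E z : [set y | tdist A z y == l] = Pset A l (sw l) z z.
  by apply/setP => y; rewrite !inE eq_tdist_sw andbb.
rewrite /valency; case: pickP => [x' _|H]; last by have := H x.
by rewrite !E; apply: inv_wdr; rewrite !tdistxx.
Qed.

Lemma cardP (P : pred V) : #|[set z | P z]| = \sum_z (P z : nat).
Proof. by rewrite -sum1_card big_mkcond /=; apply: eq_bigr => z _; rewrite inE; case: (P z). Qed.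

Lemma count_out (x : V) i j l :
  valency A i * pnum A l (sw j) i = valency A l * pnum A i j l.
Proof.
rewrite (valencyE i x) (valencyE l x) -!sum_nat_const.
rewrite (eq_bigr (fun y => #|Pset A l (sw j) x y|)); last first.
  by move=> y; rewrite inE => /eqP H; apply: pnumE.
rewrite [RHS](eq_bigr (fun z => #|Pset A i j x z|)); last first.
  by move=> y; rewrite inE => /eqP H; apply: pnumE.
rewrite big_mkcond [RHS]big_mkcond /=.
rewrite (eq_bigr (fun y => \sum_z ((tdist A x y == i) && (tdist A x z == l) && (tdist A y z == j) : nat))); last first.
  move=> y _; rewrite inE; case: (tdist A x y == i); last by rewrite big1.
  by rewrite /Pset cardP; apply: eq_bigr => z _; rewrite eq_tdist_sw.
rewrite [RHS](eq_bigr (fun z => \sum_y ((tdist A x y == i) && (tdist A x z == l) && (tdist A y z == j) : nat))); last first.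
  move=> z _; rewrite inE; case: (tdist A x z == l) => /=; last by rewrite big1 // => y _; rewrite andbF.
  by rewrite /Pset cardP; apply: eq_bigr => y _; rewrite andbT.
by rewrite exchange_big.
Qed.

Lemma sum_const_V (c : nat) : \sum_(x : V) c = #|V| * c.
Proof. by rewrite sum_nat_const mulnC. Qed.

Lemma valency_sw l : valency A (sw l) = valency A l.
Proof.
have S l' : \sum_(x : V) valency A l' = \sum_x \sum_y (tdist A x y == l' : nat).
  by apply: eq_bigr => x _; rewrite (valencyE l' x) cardP.
have E : \sum_(x : V) \sum_(y : V) (tdist A x y == sw l : nat) = \sum_(x : V) \sum_(y : V) (tdist A x y == l : nat).
  by rewrite exchange_big; apply: eq_bigr => y _; apply: eq_bigr => x _; rewrite eq_tdist_sw.
rewrite /valency; case: pickP => [x _|//].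
apply/eqP; rewrite -(eqn_pmul2l (_ : 0 < #|V|)); last by apply/card_gt0P; exists x.
rewrite -!(valencyE _ x) -!sum_const_V.
by rewrite S E -S.
Qed.

Lemma count_in (z : V) i j l :
  valency A (sw j) * pnum A (sw i) l j = valency A (sw l) * pnum A i j l.
Proof.
rewrite (valencyE (sw j) z) (valencyE (sw l) z) -!sum_nat_const.
rewrite (eq_bigr (fun y => #|Pset A (sw i) l y z|)); last first.
  by move=> y; rewrite inE eq_tdist_sw => /eqP H; apply: pnumE.
rewrite [RHS](eq_bigr (fun x => #|Pset A i j x z|)); last first.
  by move=> x; rewrite inE eq_tdist_sw => /eqP H; apply: pnumE.
rewrite big_mkcond [RHS]big_mkcond /=.
rewrite (eq_bigr (fun y => \sum_x ((tdist A x y == i) && (tdist A x z == l) && (tdist A y z == j) : nat))); last first.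
  move=> y _; rewrite inE eq_tdist_sw; case: (tdist A y z == j); last by rewrite big1 // => x _; rewrite andbF.
  by rewrite /Pset cardP; apply: eq_bigr => x _; rewrite eq_tdist_sw andbT.
rewrite [RHS](eq_bigr (fun x => \sum_y ((tdist A x y == i) && (tdist A x z == l) && (tdist A y z == j) : nat))); last first.
  move=> x _; rewrite inE eq_tdist_sw; case: (tdist A x z == l) => /=; last by rewrite big1 // => y _; rewrite andbF.
  by rewrite /Pset cardP; apply: eq_bigr => y _; rewrite andbT.
by rewrite exchange_big.
Qed.

End Count.

Section Core.
Variables (V : finType) (A : rel V).
Hypothesis wdr : weakly_distance_regular A.

Lemma core (q : nat) (ab : nat * nat) (w0 w1 w3 w4 : V) :
  tdist A w0 w1 = (1, q - 1) -> tdist A w3 w4 = (1, q - 1) ->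
  valency A ab <= valency A (1, q - 1) ->
  tdist A w1 w3 = ab ->
  (forall z, z \in Pset A (1, q - 1) (1, q - 1) w1 w3 -> tdist A w0 z = ab) ->
  (forall z, z \in Pset A (1, q - 1) (1, q - 1) w1 w3 -> tdist A z w4 = ab) ->
  Pset A ab (q - 1, 1) w0 w1 = Pset A (1, q - 1) (1, q - 1) w1 w3 /\
  Pset A (q - 1, 1) ab w3 w4 = Pset A (1, q - 1) (1, q - 1) w1 w3.
Proof.
move=> t01 t34 kle t13 H2 H3.
set t := (1, q - 1) in t01 t34 kle H2 H3 *.
set Y := Pset A t t w1 w3.
have kpos : 0 < valency A t.
  by rewrite (valencyE wdr t w0); apply/card_gt0P; exists w1; rewrite inE t01.
have kpos' : 0 < valency A t.
  done.
have cY : pnum A t t ab = #|Y| by apply: pnumE.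
split; apply/esym/eqP; rewrite eqEcard; apply/andP; split.
- apply/subsetP => z zY; have := zY; rewrite !inE => /andP [/eqP a /eqP b].
  by rewrite (H2 z zY) eqxx /= (_ : (q - 1, 1) = sw t) // eq_tdist_sw a.
- have := count_out wdr w0 t t ab; rewrite cY (pnumE wdr _ _ t01) /= => E.
  rewrite -(leq_pmul2l kpos) E leq_mul2r kle orbT //.
- apply/subsetP => z zY; have := zY; rewrite !inE => /andP [/eqP a /eqP b].
  by rewrite (H3 z zY) eqxx andbT (_ : (q - 1, 1) = sw t) // eq_tdist_sw b.
- have := count_in wdr w4 t t ab; rewrite cY (pnumE wdr _ _ t34) /= !(valency_sw wdr) => E.
  rewrite -(leq_pmul2l kpos) E leq_mul2r kle orbT //.
Qed.

End Core.

Section Cyc.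
Variables (V : finType) (A : rel V).
Hypothesis wdr : weakly_distance_regular A.
Variable q : nat.
Hypothesis q3 : 3 <= q.

Lemma tdist_typeE x y : tdist A x y = (1, q - 1) -> A x y /\ dist A y x = q - 1.
Proof. by case=> h1 h2; split=> //; apply: distA h1; apply: scA. Qed.

Lemma tdist_typeI x y : A x y -> dist A y x = q - 1 -> tdist A x y = (1, q - 1).
Proof. by move=> a d; rewrite /tdist d (dist1 (irrA wdr) (scA wdr) a). Qed.

Let tri := dist_tri (scA wdr).
Let d1 := dist1 (irrA wdr) (scA wdr).

Lemma LH1 w0 w1 w2 w3 :
  tdist A w0 w1 = (1, q - 1) -> tdist A w1 w2 = (1, q - 1) -> A w2 w3 ->
  dist A w3 w0 <= q - 3 -> tdist A w1 w3 = (2, q - 2).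
Proof.
move=> /tdist_typeE [a01 b01] /tdist_typeE [a12 b12] a23 h.
have e01 := d1 a01. have e12 := d1 a12. have e23 := d1 a23.
have t1 := tri w1 w2 w3. have t2 := tri w1 w3 w0. have t3 := tri w2 w3 w1.
have t4 := tri w3 w0 w1.
rewrite /tdist; congr pair; lia.
Qed.

Lemma LH2 w0 w1 w3 w4 z :
  A w0 w1 -> A w3 w4 -> dist A w3 w0 <= q - 3 -> dist A w4 w1 <= q - 3 ->
  z \in Pset A (1, q - 1) (1, q - 1) w1 w3 ->
  tdist A w0 z = (2, q - 2) /\ tdist A z w4 = (2, q - 2).
Proof.
move=> a01 a34 h1 h2.
rewrite inE => /andP [/eqP /tdist_typeE [Az Bz] /eqP /tdist_typeE [Az' Bz']].
have z1 := d1 Az. have z2 := d1 Az'. have d0 := d1 a01. have d3 := d1 a34.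
have t1 := tri w0 w1 z.
have t2 := tri w3 w0 z.
have t3 := tri z w3 w0.
have t4 := tri z w0 w1.
have t5 := tri z w3 w4.
have t6 := tri z w4 w1.
have t7 := tri w4 w1 z.
have t8 := tri w3 w4 z.
rewrite /tdist; split; congr pair; lia.
Qed.

End Cyc.

Lemma modS_lt j m : (j %% m).+1 < m -> j.+1 %% m = (j %% m).+1.
Proof. by move=> h; rewrite -addn1 -modnDml modn_small addn1. Qed.

Lemma modS_eq j m : (j %% m).+1 = m -> j.+1 %% m = 0.
Proof. by move=> h; rewrite -addn1 -modnDml addn1 h modnn. Qed.

Section Per.
Variables (V : finType) (A : rel V).
Hypothesis wdr : weakly_distance_regular A.
Variable q : nat.
Hypothesis q3 : 3 <= q.
Variable c : nat -> V.
Hypothesis cper : forall j, c (j + q) = c j.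

Lemma per_mod j : c j = c (j %% q).
Proof.
rewrite {1}(divn_eq j q); elim: (j %/ q) => [|k IH]; first by rewrite mul0n add0n.
by rewrite mulSn [q + _]addnC addnAC cper.
Qed.

Lemma path_fun (e : rel V) a n : (forall j, e (c j) (c j.+1)) ->
  path e (c a) (map c (iota a.+1 n)).
Proof. by move=> H; elim: n a => [|n IH] a //=; rewrite H IH. Qed.

Hypothesis ctype : forall j, tdist A (c j) (c j.+1) = (1, q - 1).

Lemma circ_of_per : type_circuit A (q - 1) (map c (iota 0 q)).
Proof.
have cA j : A (c j) (c j.+1) by case: (tdist_typeE wdr (ctype j)).
have cB j : dist A (c j.+1) (c j) = q - 1 by case: (tdist_typeE wdr (ctype j)).
have qE : q = (q - 1).+1 by lia.
apply/and3P; split.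
- by rewrite qE.
- rewrite map_inj_in_uniq ?iota_uniq // => i j; rewrite !mem_iota !add0n => iq jq.
  wlog lt : i j iq jq / i <= j.
    move=> W E; case: (leqP i j) => h; first by apply: W.
    by apply/esym; apply: W => //; apply: ltnW.
  move=> E; case: (ltngtP i j) => ij; [| lia | by []].
  have h1 := cB (i + q - 1).
  rewrite (_ : (i + q - 1).+1 = i + q) in h1; last by lia.
  rewrite cper in h1.
  have h2 := dist_tri (scA wdr) (c i) (c j) (c (i + q - 1)).
  have h3 : dist A (c j) (c (i + q - 1)) <= i + q - 1 - j.
    have := @dist_fun V A c j (i + q - 1 - j) (fun k _ => cA k).
    by rewrite (_ : j + (i + q - 1 - j) = i + q - 1); last lia.
  rewrite E in h1; lia.
- have -> : iota 0 q = 0 :: iota 1 (q - 1) by rewrite {1}qE.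
  rewrite /=.
  have R n : rcons (map c (iota 1 n)) (c n.+1) = map c (iota 1 n.+1).
    by rewrite -map_rcons -cats1; congr map; rewrite -(addn1 n) iotaD add1n addn1.
  have e0 : c 0 = c (q - 1).+1 by rewrite -qE -{1}(add0n q) cper.
  rewrite e0 R -e0.
  apply: path_fun => j; rewrite /arc_type cA /=; by rewrite cB.
Qed.

End Per.

Section Circ.
Variables (V : finType) (A : rel V) (x0 : V) (xs : seq V).
Definition cf (j : nat) : V := nth x0 (x0 :: xs) (j %% (size xs).+1).

Lemma cf_per j : cf (j + (size xs).+1) = cf j.
Proof. by rewrite /cf modnDr. Qed.

Lemma cf_type r : type_circuit A r (x0 :: xs) ->
  forall j, arc_type A r (cf j) (cf j.+1).
Proof.
move=> /and3P [_ _ cyc] j; move: cyc; rewrite /cycle => /(pathP x0) H.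
set m := (size xs).+1.
have im : j %% m < m by rewrite ltn_mod.
have := H (j %% m); rewrite size_rcons => /(_ im).
rewrite -rcons_cons nth_rcons /= im /cf -/m.
rewrite nth_rcons.
case: (ltnP (j %% m) (size xs)) => h.
  by rewrite (modS_lt (_ : (j %% m).+1 < m)).
have e : (j %% m).+1 = m by rewrite /m; apply/eqP; rewrite eqn_leq im.
rewrite (modS_eq e) /=.
by rewrite (_ : j %% m == size xs) //; apply/eqP; rewrite /m in e; case: e.
Qed.

End Circ.

Section Exist.
Variables (V : finType) (A : rel V).
Hypothesis wdr : weakly_distance_regular A.
Variable q : nat.
Hypothesis q3 : 3 <= q.
Hypothesis p2 : 0 < pnum A (1, q - 1) (1, q - 1) (2, q - 2).

Definition PP k := exists c : nat -> V, [/\ forall j, c (j + q) = c j,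
  forall j, A (c j) (c j.+1) &
  forall j, j %% q < k -> tdist A (c j) (c j.+1) = (1, q - 1)].

Lemma cS (c : nat -> V) : (forall j, c (j + q) = c j) -> forall j, c j.+1 = c (j %% q).+1.
Proof.
move=> cp j; rewrite (per_mod cp j.+1) (per_mod cp (j %% q).+1).
by rewrite -addn1 -modnDml addn1.
Qed.

Lemma E_base : PP 2.
Proof.
move: p2; rewrite /pnum; case: pickP => [[u w] /= /eqP tuw|]; last by [].
move=> /card_gt0P [v]; rewrite inE => /andP [/eqP tuv /eqP tvw].
have := dist_walk (scA wdr) w u; case: tuw => _ ->; move/walknP => [p [sp pp lp]].
case: (tdist_typeE wdr tuv) => Auv _; case: (tdist_typeE wdr tvw) => Avw _.
set L := u :: v :: w :: p.
have sL : size L = q.+1 by rewrite /L /= sp; lia.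
have pL : path A u (behead L) by rewrite /= Auv Avw pp.
have lL : nth u L q = u.
  by rewrite -[q]/(q.+1.-1) -sL nth_last /= lp.
have aL i : i < q -> A (nth u L i) (nth u L i.+1).
  by move=> iq; move/(pathP u): pL => /(_ i); rewrite /= sp (_ : (q - 2).+2 = q) //; [apply | lia].
exists (fun j => nth u L (j %% q)); split.
- by move=> j; rewrite modnDr.
- move=> j; have jq : j %% q < q by rewrite ltn_mod; lia.
  case: (ltnP (j %% q).+1 q) => h.
    by rewrite (modS_lt h); apply: aL.
  have e : (j %% q).+1 = q by lia.
  by rewrite (modS_eq e) /=; have := aL _ jq; rewrite e lL.
- move=> j jl; rewrite modS_lt; last lia.
  by case: (j %% q) jl => [|[|//]] _ /=; [exact: tuv | exact: tvw].
Qed.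

Lemma E_step k : 2 <= k < q -> PP k -> PP k.+1.
Proof.
case: k => [|[|k]] //= kq [c [cp cA ct]].
have cs := cS cp.
have t0 : tdist A (c k) (c k.+1) = (1, q - 1) by apply: ct; rewrite modn_small; lia.
have t1 : tdist A (c k.+1) (c k.+2) = (1, q - 1) by apply: ct; rewrite modn_small; lia.
have w3 : dist A (c k.+3) (c k) <= q - 3.
  have := @dist_fun V A c k.+3 (q - 3) (fun j _ => cA j).
  by rewrite (_ : k.+3 + (q - 3) = k + q) ?cp //; lia.
have h1 := LH1 wdr q3 t0 t1 (cA k.+2) w3.
have := p2; rewrite (pnumE wdr _ _ h1) => /card_gt0P [z zY].
have := zY; rewrite inE => /andP [/eqP tz1 /eqP tz3].
exists (fun j => if j %% q == k.+2 then z else c j).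
have key j : j.+1 %% q == k.+2 = (j %% q == k.+1).
  have jq : j %% q < q by rewrite ltn_mod; lia.
  case: (ltnP (j %% q).+1 q) => h; first by rewrite (modS_lt h).
  have e : (j %% q).+1 = q by lia.
  rewrite (modS_eq e) /=; apply/esym/negbTE/eqP; lia.
split.
- by move=> j; rewrite modnDr cp.
- move=> j; rewrite key.
  case: eqP => [e2|ne2].
    rewrite cs e2.
    rewrite (gtn_eqF (ltnSn k.+1)); by case: (tdist_typeE wdr tz3).
  case: eqP => [e1|ne1]; last exact: cA.
  rewrite (per_mod cp j) e1.
  by case: (tdist_typeE wdr tz1).
- move=> j jl; rewrite key.
  case: eqP => [e2|ne2].
    by rewrite cs e2 (gtn_eqF (ltnSn k.+1)).
  case: eqP => [e1|ne1]; last by apply: ct; lia.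
  by rewrite (per_mod cp j) e1.
Qed.

Lemma E_all : exists c : nat -> V, (forall j, c (j + q) = c j) /\
  forall j, tdist A (c j) (c j.+1) = (1, q - 1).
Proof.
have H k : 2 <= k <= q -> PP k.
  elim: k => [//|k IH] /andP [h1 h2].
  case: (ltngtP k 1) => [lt|lt|->]; [exfalso; lia| |exact: E_base].
  by apply: E_step; [lia | apply: IH; lia].
have [c [cp _ ct]] := H q (ltac:(lia)).
by exists c; split => // j; apply: ct; rewrite ltn_mod; lia.
Qed.

End Exist.

Section Ident.
Local Open Scope ring_scope.
Variables (G : zmodType) (a b d e Z Y3 w v u : G).
Lemma I1 : (Z + (b - a)) - b = Z - a. Proof. by rewrite addrAC subrKA. Qed.
Lemma I2 : b - (Z + (b - a)) = a - Z. Proof. by rewrite -opprB I1 opprB. Qed.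
Lemma I3 : (a + (d - b)) - a = d - b. Proof. by rewrite addrC addKr. Qed.
Lemma I4 : (a + (e - b)) - (a + (d - b)) = e - d.
Proof. by rewrite opprD addrACA subrr add0r opprB addrA subrK. Qed.
Lemma I5 : e - (a + (e - b)) = b - a. Proof. by rewrite opprD opprB addrCA subrKC addrC. Qed.
Lemma I6 : (Y3 - (Z - a)) - a = Y3 - Z. Proof. by rewrite opprB addrAC subrKA. Qed.
Lemma I7 : Y3 - (Y3 - (Z - a)) = Z - a. Proof. by rewrite opprB addrCA subrr addr0. Qed.
Lemma I8 : e - ((a + (e - b)) - (Z - a)) = (Z + (b - a)) - a.
Proof. by rewrite opprB addrCA I5 addrAC. Qed.
Lemma I9 : (w + u) - (v + u) = w - v. Proof. by rewrite opprD addrACA subrr addr0. Qed.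
End Ident.

Section Cay.
Local Open Scope ring_scope.
Variables (V : finType) (A : rel V) (G : finZmodType) (S : {set G}) (phi : V -> G).
Hypothesis hc : cayley_iso A S phi.

Lemma tdist_trans x y x' y' : phi y - phi x = phi y' - phi x' ->
  tdist A x y = tdist A x' y'.
Proof.
case: hc => [[g gK Kg] _ HA] H.
pose tau (u : G) (v : V) := g (phi v + u).
have tauA u v w : A (tau u v) (tau u w) = A v w by rewrite !HA /tau !Kg I9.
have tauK u v : tau (- u) (tau u v) = v by rewrite /tau Kg addrK gK.
have tauW u n v w : walkn A n (tau u v) (tau u w) = walkn A n v w.
  elim: n v => [|n IH] v /=.
    by rewrite (inj_eq (can_inj (tauK u))).
  apply/existsP/existsP => [[z /andP [a1 a2]]|[z /andP [a1 a2]]].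
    exists (tau (- u) z); rewrite -(tauA u) -IH.
    by rewrite (_ : tau u (tau (- u) z) = z) ?a1 ?a2 // /tau Kg subrK gK.
  by exists (tau u z); rewrite tauA IH a1 a2.
set u := phi x' - phi x.
have ex : tau u x = x' by rewrite /tau subrKC gK.
have ey : tau u y = y' by rewrite /tau addrCA H subrKC gK.
rewrite -ex -ey /tdist /dist; congr pair; apply: eq_find => n; by rewrite tauW.
Qed.

End Cay.

Section G1.
Variables (V : finType) (A : rel V).
Hypothesis wdr : weakly_distance_regular A.

Lemma G1 (t : nat * nat) : size (Gamma_sq A t) = 1 ->
  forall u v w u' v' w', tdist A u v = t -> tdist A v w = t ->
  tdist A u' v' = t -> tdist A v' w' = t -> tdist A u w = tdist A u' w'.
Proof.
move=> H.
have M u v w : tdist A u v = t -> tdist A v w = t -> tdist A u w \in Gamma_sq A t.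
  move=> h1 h2; rewrite /Gamma_sq mem_undup mem_filter.
  rewrite (pnumE wdr _ _ (erefl (tdist A u w))) -lt0n; apply/andP; split.
    by apply/card_gt0P; exists v; rewrite inE h1 h2 !eqxx.
  by apply/mapP; exists (u, w); rewrite ?mem_enum ?inE.
move=> u v w u' v' w' h1 h2 h3 h4.
have := M _ _ _ h1 h2; have := M _ _ _ h3 h4.
case: (Gamma_sq A t) H => [|e [|]] // _.
by rewrite !inE => /eqP -> /eqP ->.
Qed.

End G1.

Section Main.
Variables (V : finType) (A : rel V) (q : nat) (x0 : V) (xs : seq V) (a b : nat).
Hypothesis wdr : weakly_distance_regular A.
Hypothesis q3 : 3 <= q.
Hypothesis circ : type_circuit A (q - 1) (x0 :: xs).
Hypothesis minc : forall s : seq V, type_circuit A (q - 1) s -> size (x0 :: xs) <= size s.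
Hypothesis tab : tdist A x0 (cvert x0 xs 2%:Z) = (a, b).
Hypothesis kle : valency A (a, b) <= valency A (1, q - 1).
Hypothesis hyp : (0 < pnum A (1, q - 1) (1, q - 1) (2, q - 2)) \/
     size (Gamma_sq A (1, q - 1)) = 1.

Local Notation m := (size xs).+1.
Local Notation c := (cf x0 xs).

Lemma ctype j : tdist A (c j) (c j.+1) = (1, q - 1).
Proof. by have /andP [h /eqP d] := cf_type circ j; apply: tdist_typeI. Qed.
Lemma cA j : A (c j) (c j.+1). Proof. by case: (tdist_typeE wdr (ctype j)). Qed.
Lemma cB j : dist A (c j.+1) (c j) = q - 1. Proof. by case: (tdist_typeE wdr (ctype j)). Qed.
Lemma cper j : c (j + m) = c j. Proof. exact: cf_per. Qed.
Lemma cW j k : dist A (c j) (c (j + k)) <= k.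
Proof. by apply: dist_fun => i _; apply: cA. Qed.

Lemma mq : q <= m.
Proof.
have h := cW 1 (m - 1).
rewrite (_ : 1 + (m - 1) = 0 + m) ?cper ?cB in h; last by lia.
lia.
Qed.

Lemma cvE (i : int) (k : nat) : (i %% m)%Z = Posz (k %% m) -> cvert x0 xs i = c k.
Proof. by move=> H; rewrite /cvert /cf H. Qed.

Lemma tab' : tdist A (c 0) (c 2) = (a, b).
Proof.
rewrite -tab (cvE (k := 2)) ?modz_nat //.
Qed.

Lemma mEq : 0 < pnum A (1, q - 1) (1, q - 1) (2, q - 2) -> m = q.
Proof.
move=> p2; apply/eqP; rewrite eqn_leq mq andbT.
have [c' [cp' ct']] := E_all wdr q3 p2.
have := minc (circ_of_per wdr q3 cp' ct').
by rewrite size_map size_iota.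
Qed.

Lemma claimH n : [/\ tdist A (c n.+1) (c n.+3) = (a, b),
  (forall z, z \in Pset A (1, q - 1) (1, q - 1) (c n.+1) (c n.+3) -> tdist A (c n) z = (a, b)) &
  (forall z, z \in Pset A (1, q - 1) (1, q - 1) (c n.+1) (c n.+3) -> tdist A z (c n.+4) = (a, b))].
Proof.
case: hyp => [p2|g1].
- have emq := mEq p2.
  have d3 k : dist A (c k.+3) (c k) <= q - 3.
    have := cW k.+3 (q - 3).
    by rewrite (_ : k.+3 + (q - 3) = k + m) ?cper //; lia.
  have H1 k : tdist A (c k.+1) (c k.+3) = (2, q - 2).
    exact: (LH1 wdr q3 (ctype k) (ctype k.+1) (cA k.+2) (d3 k)).
  have eab : (a, b) = (2, q - 2).
    have e0 : c m = c 0 := cper 0.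
    have e2 : c m.+2 = c 2 := cper 2.
    by rewrite -tab' -e0 -e2 -(prednK (ltn0Sn (size xs))) H1.
  rewrite eab; split; first exact: H1.
    by move=> z zY; case: (LH2 wdr q3 (cA n) (cA n.+3) (d3 n) (d3 n.+1) zY).
  by move=> z zY; case: (LH2 wdr q3 (cA n) (cA n.+3) (d3 n) (d3 n.+1) zY).
- have GG := G1 wdr g1.
  have E u v w : tdist A u v = (1, q - 1) -> tdist A v w = (1, q - 1) -> tdist A u w = (a, b).
    by move=> h1 h2; rewrite -tab'; apply: (GG _ v _ _ (c 1)) => //; apply: ctype.
  split; first by apply: (E _ (c n.+2)); apply: ctype.
    move=> z; rewrite inE => /andP [/eqP h1 _]; exact: (E _ _ _ (ctype n) h1).
  move=> z; rewrite inE => /andP [_ /eqP h2]; exact: (E _ _ _ h2 (ctype n.+3)).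
Qed.

Lemma claim n : [/\ tdist A (c n.+1) (c n.+3) = (a, b),
  Pset A (a, b) (q - 1, 1) (c n) (c n.+1) = Pset A (1, q - 1) (1, q - 1) (c n.+1) (c n.+3) &
  Pset A (q - 1, 1) (a, b) (c n.+3) (c n.+4) = Pset A (1, q - 1) (1, q - 1) (c n.+1) (c n.+3)].
Proof.
case: (claimH n) => h1 h2 h3.
by case: (core wdr (ctype n) (ctype n.+3) kle h1 h2 h3) => e1 e2; split.
Qed.

Lemma cay n (q4 : 3 < q) (G : finZmodType) (S : {set G}) (phi : V -> G)
  (hc : cayley_iso A S phi) :
  [set (phi z - phi (c n.+1))%R | z in Pset A (1, q - 1) (1, q - 1) (c n.+1) (c n.+3)] =
  [set (phi z - phi (c n.+2))%R | z in Pset A (1, q - 1) (1, q - 1) (c n.+2) (c n.+4)].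
Proof.
have hc' := hc; case: hc' => [[g gK Kg] S0 HA].
have tr := tdist_trans hc.
case: (claim n) => h1 e1 e1'; case: (claim n.+1) => h2 e2 e2'.
apply/eqP; rewrite eqEcard; apply/andP; split; last first.
  have inj (v0 : V) : injective (fun z => (phi z - phi v0)%R).
    by move=> z1 z2 /addIr /(can_inj gK).
  rewrite !card_imset ?inj //.
  by rewrite -(pnumE wdr _ _ h1) -(pnumE wdr _ _ h2).
apply/subsetP => _ /imsetP [z zY ->].
have := zY; rewrite inE => /andP [/eqP zt1 /eqP zt3].
set a1 := phi (c n.+1); set b1 := phi (c n.+2); set d1 := phi (c n.+3); set e1'' := phi (c n.+4).
set w := g (phi z + (b1 - a1))%R.
have pw : phi w = (phi z + (b1 - a1))%R by rewrite Kg.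
apply/imsetP; exists w; last by rewrite pw I1.
rewrite -e2 inE; apply/andP; split; apply/eqP; last first.
  by rewrite (tdist_trans hc (x' := z) (y' := c n.+1)) ?pw ?I2 // tdist_sw zt1.
case: hyp => [p2|g1].
- have emq := mEq p2.
  have d3 k : dist A (c k.+3) (c k) <= q - 3.
    have := cW k.+3 (q - 3).
    by rewrite (_ : k.+3 + (q - 3) = k + m) ?cper //; lia.
  have d4 : dist A (c n.+4) (c n) <= q - 4.
    have := cW n.+4 (q - 4).
    by rewrite (_ : n.+4 + (q - 4) = n + m) ?cper //; lia.
  set y2 := g (a1 + (d1 - b1))%R.
  set y3 := g (a1 + (e1'' - b1))%R.
  have py2 : phi y2 = (a1 + (d1 - b1))%R by rewrite Kg.
  have py3 : phi y3 = (a1 + (e1'' - b1))%R by rewrite Kg.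
  have t12 : tdist A (c n.+1) y2 = (1, q - 1).
    by rewrite (tdist_trans hc (x' := c n.+2) (y' := c n.+3)) ?py2 ?I3 // ctype.
  have t23 : tdist A y2 y3 = (1, q - 1).
    by rewrite (tdist_trans hc (x' := c n.+3) (y' := c n.+4)) ?py2 ?py3 ?I4 // ctype.
  have t34 : tdist A y3 (c n.+4) = (1, q - 1).
    by rewrite (tdist_trans hc (x' := c n.+1) (y' := c n.+2)) ?py3 ?I5 // ctype.
  have a23 : A y2 y3 by case: (tdist_typeE wdr t23).
  have a34 : A y3 (c n.+4) by case: (tdist_typeE wdr t34).
  have dy : dist A y3 (c n) <= q - 3.
    have := dist_tri (scA wdr) y3 (c n.+4) (c n).
    rewrite (dist1 (irrA wdr) (scA wdr) a34); lia.
  have hW1 := LH1 wdr q3 (ctype n) t12 a23 dy.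
  have eab : (a, b) = (2, q - 2).
    by rewrite -h1; exact: (LH1 wdr q3 (ctype n) (ctype n.+1) (cA n.+2) (d3 n)).
  have kle' : valency A (2, q - 2) <= valency A (1, q - 1) by rewrite -eab.
  rewrite eab in h1 e1 *.
  have hW2 := LH2 wdr q3 (cA n) a34 dy (d3 n.+1).
  have [eW1 eW2] := core wdr (ctype n) t34 kle' hW1
    (fun z' zz => proj1 (hW2 z' zz)) (fun z' zz => proj2 (hW2 z' zz)).
  have zW : z \in Pset A (1, q - 1) (1, q - 1) (c n.+1) y3 by rewrite -eW1 e1.
  have := zW; rewrite inE => /andP [_ /eqP zy3].
  set g' := g (phi y3 - (phi z - a1))%R.
  have pg : phi g' = (phi y3 - (phi z - a1))%R by rewrite Kg.
  have gW : g' \in Pset A (1, q - 1) (1, q - 1) (c n.+1) y3.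
    rewrite inE; apply/andP; split; apply/eqP.
      by rewrite (tdist_trans hc (x' := z) (y' := y3)) // pg I6.
    by rewrite (tdist_trans hc (x' := c n.+1) (y' := z)) // pg I7.
  move: gW; rewrite -eW2 inE => /andP [_ /eqP tg].
  by rewrite (tdist_trans hc (x' := g') (y' := c n.+4)) // pw pg py3 I8.
- have GG := G1 wdr g1.
  rewrite -tab'; apply: (GG _ (c n.+2) _ _ (c 1)); rewrite ?ctype //.
  by rewrite (tdist_trans hc (x' := c n.+1) (y' := z)) ?pw ?I1.
Qed.

End Main.

Unset Implicit Arguments.
Set Strict Implicit.

Theorem lemma2p7 (V : finType) (A : rel V) (q : nat) (x0 : V) (xs : seq V)
    (a b : nat) :
  weakly_distance_regular A ->
  (3 <= q)%N ->
  type_circuit A (q - 1) (x0 :: xs) ->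
  (forall s : seq V, type_circuit A (q - 1) s -> (size (x0 :: xs) <= size s)%N) ->
  tdist A x0 (cvert x0 xs 2%:Z) = (a, b) ->
  (valency A (a, b) <= valency A (1, q - 1))%N ->
  ((0 < pnum A (1, q - 1) (1, q - 1) (2, q - 2))%N \/
     size (Gamma_sq A (1, q - 1)) = 1%N) ->
  (forall i : int,
     [/\ tdist A (cvert x0 xs (i - 1)%R) (cvert x0 xs (i + 1)%R) = (a, b),
         Pset A (a, b) (q - 1, 1) (cvert x0 xs (i - 2%:Z)%R) (cvert x0 xs (i - 1)%R)
           = Ycirc A q x0 xs i &
         Pset A (q - 1, 1) (a, b) (cvert x0 xs (i + 1)%R) (cvert x0 xs (i + 2%:Z)%R)
           = Ycirc A q x0 xs i ]) /\
  ((3 < q)%N ->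
     forall (G : finZmodType) (S : {set G}) (phi : V -> G),
       cayley_iso A S phi ->
       forall i : int,
         [set (phi z - phi (cvert x0 xs (i - 1)%R))%R | z in Ycirc A q x0 xs i]
         = [set (phi z - phi (cvert x0 xs i))%R | z in Ycirc A q x0 xs (i + 1)%R]).
Proof.
move=> wdr q3 circ minc tab kle hyp.
have cl := claim wdr q3 circ minc tab kle hyp.
have cy := cay wdr q3 circ minc tab kle hyp.
have mqq := mq wdr q3 circ kle hyp.
set m := (size xs).+1 in mqq.
have cvZ (j : int) (k : nat) (z : int) : j = (Posz k + z * Posz m)%R -> cvert x0 xs j = cf x0 xs k.
  move=> ->; apply: cvE; rewrite addrC modzMDl modz_nat //.
have base (i : int) : exists r : nat, [/\ r < m &
   forall (j : int) (k : nat), (Posz k = j - i + Posz r + Posz m)%R -> cvert x0 xs j = cf x0 xs k].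
  set Q := (i %/ m)%Z.
  have mpos : (Posz m != 0)%R by [].
  have ge := modz_ge0 i mpos.
  exists `|(i %% m)%Z|%N; split.
    by rewrite -ltz_nat gez0_abs // ltz_pmod.
  move=> j k hk; apply: (cvZ _ _ (Q - 1)%R).
  have di := divz_eq i m.
  rewrite gez0_abs // in hk.
  rewrite mulrBl mul1r; rewrite -/Q in di; lia.
split.
- move=> i; have [r [rm E]] := base i.
  set n := r + m - 2.
  rewrite /Ycirc.
  rewrite (E (i - 2%:Z)%R n); last by rewrite /n; lia.
  rewrite (E (i - 1)%R n.+1); last by rewrite /n; lia.
  rewrite (E (i + 1)%R n.+3); last by rewrite /n; lia.
  rewrite (E (i + 2%:Z)%R n.+4); last by rewrite /n; lia.
  by case: (cl n).
- move=> q4 G S phi hc i; have [r [rm E]] := base i.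
  set n := r + m - 2.
  rewrite /Ycirc.
  rewrite (E (i - 1)%R n.+1); last by rewrite /n; lia.
  rewrite (E (i + 1)%R n.+3); last by rewrite /n; lia.
  rewrite (E i n.+2); last by rewrite /n; lia.
  rewrite (E (i + 1 - 1)%R n.+2); last by rewrite /n; lia.
  rewrite (E (i + 1 + 1)%R n.+4); last by rewrite /n; lia.
  exact: (cy n q4 G S phi hc).
Qed.
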